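(* Let $G=(V,D,B)$ be a mixed graph, $v\in V$, and $Y\subseteq V\setminus(\{v\}\cup\mathrm{sib}(v))$ with $|Y|=|\mathrm{pa}(v)|$. For $(\Lambda,\Omega)\in\Theta$ with $\Sigma=\phi_G(\Lambda,\Omega)$ let $\mathbf{J}=[(I-\Lambda)^T\Sigma]_{Y,\mathrm{pa}(v)}$ (the submatrix with rows $Y$ and columns $\mathrm{pa}(v)$). If $\mathbf{J}$ is generically invertible, i.e. $\det\mathbf{J}$ is not identically zero as a function of $(\Lambda,\Omega)\in\Theta$, then $Y$ satisfies the half-trek criterion with respect to $v$.
   Context: A mixed graph is $G=(V,D,B)$ with $V=[m]$, $D$ directed edges $v\to w$, $B$ symmetric bidirected edges $v\leftrightarrow w$, no self-loops. $\mathrm{pa}(v)=\{w:w\to v\in D\}$, $\mathrm{sib}(v)=\{w:w\leftrightarrow v\in B\}$. $\mathbb{R}^D_{\mathrm{reg}}$: real $m\times m$ $\Lambda$ with $\lambda_{vw}=0$ for $v\to w\notin D$ and $I-\Lambda$ invertible; $\mathrm{PD}(B)$: positive definite symmetric $\Omega$ with $\omega_{vw}=0$ for $v\ne w$, $v\leftrightarrow w\notin B$; $\Theta=\mathbb{R}^D_{\mathrm{reg}}\times\mathrm{PD}(B)$; $\phi_G(\Lambda,\Omega)=(I-\Lambda)^{-T}\Omega(I-\Lambda)^{-1}$. A half-trek from $y$ to $w$ is a path $y\leftrightarrow w_0\to w_1\to\cdots\to w_r=w$ (left side $\{y\}$, right side $\{w_0,\dots,w_r\}$) or $y\to w_1\to\cdots\to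 w_r=w$, $r\ge0$ (left side $\{y\}$, right side $\{y,w_1,\dots,w_r\}$); nodes may repeat. A system of half-treks from $X$ to $Y$: half-treks with distinct sources forming $X$ and distinct targets forming $Y$; no sided intersection: pairwise disjoint left sides and pairwise disjoint right sides. $Y$ satisfies the half-trek criterion w.r.t. $v$ if $|Y|=|\mathrm{pa}(v)|$, $Y\cap(\{v\}\cup\mathrm{sib}(v))=\emptyset$, and there is a system of half-treks with no sided intersection from $Y$ to $\mathrm{pa}(v)$. *)

(* Defs.v *)
From HB Require Import structures.
From mathcomp Require Import all_boot all_order all_algebra.
Set Implicit Arguments. Unset Strict Implicit. Unset Printing Implicit Defensive.
Import Order.TTheory GRing.Theory Num.Theory.

(* Vertices are 'I_m.  A mixed graph G = (V, D, B) is given by two relations: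
   [D a b] means the directed edge a -> b is in D,
   [B a b] means the bidirected edge a <-> b is in B. *)
Definition mixed_graph (m : nat) (D B : rel 'I_m) : Prop :=
  irreflexive D /\ irreflexive B /\ symmetric B.

Definition pa (m : nat) (D : rel 'I_m) (v : 'I_m) : {set 'I_m} :=
  [set w | D w v].
Definition sib (m : nat) (B : rel 'I_m) (v : 'I_m) : {set 'I_m} :=
  [set w | B w v].

(* A half-trek from y to w is encoded by its source y and the sequence rs
   of its right-side nodes, in order:
   - y <-> w0 -> w1 -> ... -> wr = w   is encoded by rs = [:: w0; ...; wr]
     (first node a sibling of y);
   - y -> w1 -> ... -> wr = w (r >= 0) is encoded by rs = [:: y; w1; ...; wr]
     (first node equal to y).
   Since B is irreflexive, the two cases are distinguished by the head. *)
Definition is_halftrek (m : nat) (D B : rel 'I_m) (y w : 'I_m)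
    (rs : seq 'I_m) : bool :=
  match rs with
  | [::] => false
  | h :: t => ((h == y) || B y h) && path D h t && (last h t == w)
  end.

Definition left_side (m : nat) (y : 'I_m) : {set 'I_m} := [set y].
Definition right_side (m : nat) (rs : seq 'I_m) : {set 'I_m} :=
  [set x in rs].

Definition system_no_sided_intersection (m : nat) (D B : rel 'I_m)
    (X Y : {set 'I_m}) : Prop :=
  exists (tgt : 'I_m -> 'I_m) (rs : 'I_m -> seq 'I_m),
    [/\ (forall y, y \in X -> is_halftrek D B y (tgt y) (rs y)),
        {in X &, injective tgt},
        tgt @: X = Y,
        (forall y1 y2, y1 \in X -> y2 \in X -> y1 != y2 ->
           [disjoint left_side y1 & left_side y2]) &
        (forall y1 y2, y1 \in X -> y2 \in X -> y1 != y2 ->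
           [disjoint right_side (rs y1) & right_side (rs y2)])].

Definition htc (m : nat) (D B : rel 'I_m) (Y : {set 'I_m}) (v : 'I_m) : Prop :=
  [/\ #|Y| = #|pa D v|,
      Y :&: (v |: sib B v) = set0 &
      system_no_sided_intersection D B Y (pa D v)].

Local Open Scope ring_scope.

Definition RDreg (R : realFieldType) (m : nat) (D : rel 'I_m)
    (L : 'M[R]_m) : Prop :=
  (forall a b, ~~ D a b -> L a b = 0) /\ (1%:M - L) \in unitmx.

Definition PDB (R : realFieldType) (m : nat) (B : rel 'I_m)
    (O : 'M[R]_m) : Prop :=
  [/\ O^T = O,
      (forall a b, a != b -> ~~ B a b -> O a b = 0) &
      (forall x : 'cV[R]_m, x != 0 -> 0 < (x^T *m O *m x) 0 0)].

Definition Theta (R : realFieldType) (m : nat) (D B : rel 'I_m)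
    (L O : 'M[R]_m) : Prop := RDreg D L /\ PDB B O.

Definition phiG (R : realFieldType) (m : nat) (L O : 'M[R]_m) : 'M[R]_m :=
  (invmx (1%:M - L))^T *m O *m invmx (1%:M - L).

(* J = [(I - L)^T Sigma]_{Y, pa(v)}, as a square matrix of size #|pa v|
   (used when #|Y| = #|pa v|): rows indexed by the elements of Y and columns
   by the elements of pa(v), both in increasing order (v is only a dummy
   default, never used when #|Y| = #|pa v|). *)
Definition Jmat (R : realFieldType) (m : nat) (D : rel 'I_m) (v : 'I_m)
    (Y : {set 'I_m}) (L O : 'M[R]_m) : 'M[R]_#|pa D v| :=
  let M := (1%:M - L)^T *m phiG L O in
  \matrix_(i < #|pa D v|, j < #|pa D v|)
     M (nth v (enum Y) i) (nth v (enum (pa D v)) j).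

Definition generically_invertible_J (R : realFieldType) (m : nat)
    (D B : rel 'I_m) (v : 'I_m) (Y : {set 'I_m}) : Prop :=
  ~ (forall L O : 'M[R]_m, Theta D B L O -> \det (Jmat D v Y L O) = 0).

(* Main.v *)
Require Import Defs.
From HB Require Import structures.
From mathcomp Require Import all_boot all_order all_algebra all_fingroup.
Set Implicit Arguments. Unset Strict Implicit. Unset Printing Implicit Defensive.
Import Order.TTheory GRing.Theory Num.Theory.
Local Open Scope ring_scope.

Lemma det_block_nz (R : fieldType) m n (A: 'M[R]_m) (E : 'M_(m,n)) (W: 'M_(n,m)) :
 A \in unitmx -> \det (W *m invmx A *m E) != 0 -> \det (block_mx A E W 0) != 0.
Proof.
move=> uA hJ.
have H : block_mx 1%:M 0 (- (W *m invmx A)) 1%:M *m block_mx A E W 0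
   = block_mx A E 0 (- (W *m invmx A *m E)).
  rewrite mulmx_block !mul1mx !mul0mx !addr0 ?mulmx0 ?addr0 mulNmx.
  by rewrite -[W *m invmx A *m A]mulmxA mulVmx // mulmx1 addNr mulNmx.
have := congr1 determinant H.
rewrite det_mulmx det_lblock !det1 mul1r det_ublock -scaleN1r detZ mul1r => ->.
rewrite mulf_neq0 // ?mulf_neq0 ?expf_neq0 ?oppr_eq0 ?oner_eq0 //.
by rewrite unitmxE unitfE in uA.
Qed.

Lemma det_nz_perm (R : fieldType) k (M : 'M[R]_k) :
  \det M != 0 -> exists s : 'S_k, forall i, M i (s i) != 0.
Proof.
move=> H.
have : ~~ [forall s : 'S_k, [exists i, M i (s i) == 0]].
  apply: contra H => /forallP H'. rewrite /determinant big1 // => s _.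
  have /existsP [i /eqP Hi] := H' s.
  by rewrite (bigD1 i) //= Hi mul0r mulr0.
rewrite negb_forall => /existsP [s]; rewrite negb_exists => /forallP Hs.
by exists s => i; have := Hs i.
Qed.
Local Close Scope ring_scope.
Section Orbit.
Variables (m n : nat) (s : {perm 'I_(m+n)}).

Definition Pr (z : 'I_(m+n)) i := (0 < i) && ((m <= iter i s z) || (i == #[s]%g)).
Lemma Pr_ex z : exists i, Pr z i.
Proof. by exists #[s]%g; rewrite /Pr order_gt0 eqxx orbT. Qed.
Definition rr z := ex_minn (Pr_ex z).

Lemma rr_pos (z : 'I_(m+n)) : 0 < rr z.
Proof. by rewrite /rr; case: ex_minnP => i /andP[]. Qed.

Lemma rr_bot (z : 'I_(m+n)) : m <= z -> m <= iter (rr z) s z.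
Proof.
move=> hz; rewrite /rr; case: ex_minnP => i /andP[_ /orP[//|/eqP ->]] _.
by rewrite -permX expg_order perm1.
Qed.

Lemma rr_min (z : 'I_(m+n)) i : 0 < i -> i < rr z -> iter i s z < m.
Proof.
move=> i0; rewrite /rr; case: ex_minnP => r _ hmin hi.
rewrite ltnNge; apply/negP => hb.
have := hmin i; rewrite /Pr i0 hb => /(_ isT); by rewrite leqNgt hi.
Qed.

Lemma iter_inj k : injective (iter k s).
Proof. elim: k => [//|k IH] x y /= /perm_inj; exact: IH. Qed.

Lemma rr_uniq_aux (z z' : 'I_(m+n)) i j : m <= z -> i <= j -> 0 < i -> j <= rr z' ->
  iter i s z = iter j s z' -> z = z' /\ i = j.
Proof.
move=> hz hij i0 hj E.
have E2 : z = iter (j - i) s z'.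
  apply: (@iter_inj i); rewrite E -iterD subnKC //.
case: (posnP (j - i)) => hji.
  by move: E2; rewrite hji /= => ->; split => //; apply/eqP; rewrite eqn_leq hij -subn_eq0 hji.
have : iter (j - i) s z' < m by apply: rr_min => //; apply: leq_trans hj; rewrite ltn_subrL i0 (leq_trans hji) // leq_subr.
by rewrite -E2 ltnNge hz.
Qed.

Lemma rr_uniq (z z' : 'I_(m+n)) i j : m <= z -> m <= z' -> 0 < i -> i <= rr z -> 0 < j -> j <= rr z' ->
  iter i s z = iter j s z' -> z = z' /\ i = j.
Proof.
move=> hz hz' i0 hi j0 hj E.
case: (leqP i j) => hij; first exact: rr_uniq_aux.
have [-> ->] := rr_uniq_aux hz' (ltnW hij) j0 hi (esym E). by [].
Qed.
End Orbit.

Lemma path_map_iota (T : Type) (e : rel T) (f : nat -> T) a c :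
  (forall i, a <= i -> i < a + c -> e (f i) (f i.+1)) ->
  path e (f a) [seq f i | i <- iota a.+1 c].
Proof.
elim: c a => [//|c IH] a H /=.
rewrite H ?leqnn ?addnS ?ltnS ?leq_addr //.
apply: IH => i hi hic; apply: H; first exact: ltnW.
by rewrite addnS -addSn.
Qed.

Lemma last_map_iota (T : Type) (f : nat -> T) a c :
  last (f a) [seq f i | i <- iota a.+1 c] = f (a + c).
Proof.
elim: c a => [|c IH] a /=; first by rewrite addn0.
by rewrite IH addSnnS.
Qed.

From Stdlib Require Import Classical_Prop.
From mathcomp Require Import zify.

Theorem mainTheorem14 (R : realFieldType) (m : nat) (D B : rel 'I_m)
    (v : 'I_m) (Y : {set 'I_m}) :
  mixed_graph D B ->
  Y \subset ~: (v |: sib B v) ->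
  #|Y| = #|pa D v| ->
  generically_invertible_J R D B v Y ->
  htc D B Y v.
Proof.
move=> _ hY hcard hgen.
have [L [O [hT hdet]]] : exists L O : 'M[R]_m, Theta D B L O /\ (\det (Jmat D v Y L O) != 0)%R.
  case: (classic (exists L O : 'M[R]_m, Theta D B L O /\ (\det (Jmat D v Y L O) != 0)%R)) => // hno.
  exfalso; apply: hgen => L O hT; apply/eqP.
  case: (boolP (\det (Jmat D v Y L O) == 0)%R) => // hn.
  by exfalso; apply: hno; exists L, O.
case: hT => [[hL uA] [_ hO _]].
set P := pa D v in hcard hdet *.
set n := #|P| in hcard hdet *.
pose A := (1%:M - L)%R.
pose W : 'M[R]_(n, m) := (\matrix_(k < n, b < m) O (nth v (enum Y) k) b)%R.
pose E : 'M[R]_(m, n) := (\matrix_(a < m, j < n) ((a == nth v (enum P) j)%:R)%R)%R.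
have hJ : Jmat D v Y L O = (W *m invmx A *m E)%R.
  apply/matrixP => k j; rewrite /Jmat.
  have -> : ((1%:M - L)^T *m phiG L O = O *m invmx (1%:M - L))%R.
    by rewrite /phiG !mulmxA -trmx_mul mulVmx // trmx1 mul1mx.
  rewrite !mxE.
  transitivity ((W *m invmx A) k (nth v (enum P) j))%R.
    rewrite mxE; apply: eq_bigr => b _; by rewrite /W mxE.
  rewrite (bigD1 (nth v (enum P) j)) //= big1 ?addr0 => [|a ha]; rewrite /E !mxE.
    by rewrite eqxx mulr1.
  by rewrite (negbTE ha) mulr0.
  have hB : (\det (block_mx A E W 0) != 0)%R.
  by apply: det_block_nz => //; rewrite -hJ.
have [s hs] := det_nz_perm hB.
pose tp (x : 'I_(m+n)) : 'I_m := insubd v (val x).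
have tpK : forall x : 'I_(m+n), x < m -> lshift n (tp x) = x.
  by move=> x hx; apply: val_inj; rewrite /= /tp val_insubd hx.
have btK : forall x : 'I_(m+n), m <= x -> exists j : 'I_n, x = rshift m j.
  move=> x hx; have hj : x - m < n by rewrite ltn_subLR // ltn_ord.
  by exists (Ordinal hj); apply: val_inj; rewrite /= subnKC.
have F1 : forall x : 'I_(m+n), x < m -> s x < m -> tp x = tp (s x) \/ D (tp x) (tp (s x)).
  move=> x hx hsx; have hL0 := hs x.
  rewrite -{1}(tpK x hx) -(tpK (s x) hsx) block_mxEul /A !mxE in hL0.
  case: (eqVneq (tp x) (tp (s x))) => [e|hne]; [by left|right].
  move: hL0; rewrite (negbTE hne) sub0r oppr_eq0 => hL0.
  by apply: contraTT hL0 => /hL ->; rewrite eqxx.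
have F2 : forall x : 'I_(m+n), x < m -> m <= s x -> tp x = nth v (enum P) (s x - m).
  move=> x hx hsx; have [j Ej] := btK _ hsx; have hE0 := hs x.
  rewrite -{1}(tpK x hx) Ej block_mxEur /E mxE in hE0.
  rewrite Ej /= addKn; move: hE0.
  by case: (eqVneq (tp x) (nth v (enum P) j)) => // _; rewrite eqxx.
have F3 : forall x : 'I_(m+n), m <= x -> s x < m /\
    (tp (s x) = nth v (enum Y) (x - m) \/ B (nth v (enum Y) (x - m)) (tp (s x))).
  move=> x hx; have [j Ej] := btK _ hx; subst x.
  have hsx : s (rshift m j) < m.
    rewrite ltnNge; apply/negP => hb; have [j' Ej'] := btK _ hb.
    by have := hs (rshift m j); rewrite Ej' block_mxEdr mxE eqxx.
  split => //; have hO0 := hs (rshift m j).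
  rewrite -(tpK _ hsx) block_mxEdl /W mxE in hO0.
  rewrite /= addKn.
  case: (eqVneq (nth v (enum Y) j) (tp (s (rshift m j)))) => [e|hne]; [by left|right].
  by apply: contraTT hO0 => hnB; rewrite hO // eqxx.
pose z (y : 'I_m) : 'I_(m+n) := insubd (lshift n v) (m + index y (enum Y)).
have hz : forall y, y \in Y -> val (z y) = m + index y (enum Y) /\ nth v (enum Y) (z y - m) = y.
  move=> y hy.
  have hv : val (z y) = m + index y (enum Y).
    by rewrite /z val_insubd ltn_add2l -hcard cardE index_mem mem_enum hy.
  by split => //; rewrite hv addKn nth_index // mem_enum.
have zb : forall y, y \in Y -> m <= z y.
  by move=> y hy; rewrite (hz y hy).1 leq_addr.
pose r y := rr s (z y).
have r2 : forall y, y \in Y -> 1 < r y.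
  move=> y hy; have := rr_pos s (z y); rewrite leq_eqVlt => /orP[/eqP h|//].
  have := rr_bot s (zb y hy); rewrite -h /=.
  by have [h2 _] := F3 _ (zb y hy); rewrite leqNgt h2.
have rtop : forall y i, y \in Y -> 0 < i -> i < r y -> iter i s (z y) < m.
  by move=> y i hy; apply: rr_min.
have rbot : forall y, y \in Y -> m <= iter (r y) s (z y).
  by move=> y hy; apply: rr_bot; apply: zb.
have runiq : forall y1 y2 i j, y1 \in Y -> y2 \in Y -> 0 < i -> i <= r y1 -> 0 < j -> j <= r y2 ->
    iter i s (z y1) = iter j s (z y2) -> y1 = y2 /\ i = j.
  move=> y1 y2 i j h1 h2 i0 hi j0 hj e.
  have [ez ->] := rr_uniq (zb _ h1) (zb _ h2) i0 hi j0 hj e.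
  by split => //; rewrite -(hz _ h1).2 -(hz _ h2).2 ez.
pose f y i := tp (iter i s (z y)).
pose rs y := [seq f y i | i <- iota 1 (r y).-1].
pose tgt y := nth v (enum P) (iter (r y) s (z y) - m).
have tgtP : forall y, y \in Y -> iter (r y) s (z y) - m < #|P|.
  by move=> y hy; rewrite ltn_subLR ?rbot // ltn_ord.
split => //.
  apply/eqP; rewrite setI_eq0 disjoints_subset; exact: hY.
have tinj : {in Y &, injective tgt}.
  move=> y1 y2 h1 h2; rewrite /tgt => /eqP.
  rewrite nth_uniq ?enum_uniq -?cardE ?tgtP // => /eqP e.
  have e' : iter (r y1) s (z y1) = iter (r y2) s (z y2).
    by apply: ord_inj; move: e (rbot _ h1) (rbot _ h2); lia.
  have := r2 _ h1; have := r2 _ h2 => ha hb.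
  by have [] := runiq y1 y2 (r y1) (r y2) h1 h2 ltac:(lia) (leqnn _) ltac:(lia) (leqnn _) e'.
exists tgt, rs; split => //.
- move=> y hy.
  have hrs : rs y = f y 1 :: [seq f y i | i <- iota 2 (r y - 2)].
    by rewrite /rs; have := r2 y hy; case: (r y) => [|[|c]] //= _; rewrite subn2.
  rewrite /is_halftrek hrs; apply/andP; split; first (apply/andP; split).
  + have [_ [e|e]] := F3 _ (zb y hy); rewrite (hz y hy).2 in e.
      by rewrite /f /= e eqxx.
    by rewrite /f /= e orbT.
  + apply: path_map_iota => i hi hic.
    have hr := r2 y hy.
    have hi1 : iter i s (z y) < m by apply: rtop => //; lia.
    have hi2 : iter i.+1 s (z y) < m by apply: rtop => //; lia.
    rewrite /f iterS; have [e|//] := F1 _ hi1 hi2.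
    have e2 : iter i s (z y) = iter i.+1 s (z y) by rewrite -(tpK _ hi1) -(tpK _ hi2) iterS e.
    have [_] := runiq y y i i.+1 hy hy ltac:(lia) ltac:(lia) ltac:(lia) ltac:(lia) e2.
    lia.
  + rewrite last_map_iota.
    have hr := r2 y hy.
    have e1 : 1 + (r y - 2) = (r y).-1 by lia.
    have hx : iter (r y).-1 s (z y) < m by apply: rtop => //; lia.
    rewrite e1 /f (F2 _ hx) /tgt; last by rewrite -iterS prednK ?rbot // ltnW.
    by rewrite -iterS prednK // ltnW.
- apply/eqP; rewrite eqEcard card_in_imset // hcard leqnn andbT.
  apply/subsetP => _ /imsetP [y hy ->].
  by rewrite -mem_enum /tgt mem_nth // -cardE tgtP.
- move=> y1 y2 _ _ hne; rewrite /left_side -setI_eq0; apply/eqP/setP => x.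
  rewrite !inE; apply/negP => /andP[/eqP -> /eqP e].
  by rewrite e eqxx in hne.
- move=> y1 y2 h1 h2 hne; rewrite /right_side -setI_eq0; apply/eqP/setP => x.
  rewrite !inE; apply/negP => /andP [/mapP [i hi ->] /mapP [j hj]]; rewrite /f => e.
  rewrite mem_iota in hi; rewrite mem_iota in hj.
  have := r2 _ h1; have := r2 _ h2 => ha hb.
  have hx1 : iter i s (z y1) < m by apply: rtop => //; lia.
  have hx2 : iter j s (z y2) < m by apply: rtop => //; lia.
  have e2 : iter i s (z y1) = iter j s (z y2) by rewrite -(tpK _ hx1) -(tpK _ hx2) e.
  have [ey _] := runiq y1 y2 i j h1 h2 ltac:(lia) ltac:(lia) ltac:(lia) ltac:(lia) e2.
  by rewrite ey eqxx in hne.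
Qed.
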